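(* Every infinite $\lambda$-term that is $\lambda_{\mathsf{letrec}}$-expressible is strongly regular.
   Context: Infinite $\lambda$-terms are possibly infinite terms built from variables, abstractions and applications, modulo $\alpha$-equivalence. $\lambda_{\mathsf{letrec}}$-terms are finite terms $L::=x\mid \lambda x.L\mid L\,L\mid \mathsf{letrec}\ f_1=L_1,\dots,f_n=L_n\ \mathsf{in}\ L$ (recursion variables $f_i$ bound in all $L_j$). An infinite $\lambda$-term $M$ is $\lambda_{\mathsf{letrec}}$-expressible if some $\lambda_{\mathsf{letrec}}$-term $L$ unfolds to $M$, i.e. there is a strongly convergent, possibly infinite rewrite sequence from $L$ to $M$ in the letrec-unfolding rewrite system (which pushes $\mathsf{letrec}$-bindings into abstractions and applications, replaces a recursion variable $f_i$ in the scope of its binding $f_i=L_i$ by $L_i$, merges nested $\mathsf{letrec}$s, and removes unused bindings and empty $\mathsf{letrec}$s). Strong regularity: a prefixed term is $\lambda x_1\ldots x_n.M$ ($n\ge0$, distinct variables, separate abstraction prefix; $\lambda.M$ for empty prefix) with the free variables of $M$ among the $x_i$. The rewrite system $\mathit{Reg}^+$ on prefixed terms has steps $\lambda\vec{x}.\lambda y.M\to\lambda\vec{x}y.M$; $\lambda\vec{x}.(M_0\,M_1)\to\lambda\vec{x}.M_i$ ($i=0,1$); $\lambda x_1\ldots x_n.M\to\lambda x_1\ldots x_{n-1}.M$ if $x_n$ is not free in $M$. A scope-delimiting strategy $\mathbb{S}$ for $\mathit{Reg}^+$ is a history-aware strategy: to every finite $\mathit{Reg}^+$-rewrite sequence ending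 in a non-normal form it assigns a nonempty set of $\mathit{Reg}^+$-steps from its last term. $\mathrm{GST}_{\mathbb{S}}(M)$ is the set of prefixed terms reachable from $\lambda.M$ by rewrite sequences following $\mathbb{S}$. $M$ is strongly regular if $\mathrm{GST}_{\mathbb{S}}(M)$ is finite for some such $\mathbb{S}$. *)

(* Defs.v *)
(* Locally nameless is avoided: all terms use de Bruijn indices,
   so alpha-equivalence is syntactic identity (bisimilarity for infinite terms). *)
From Stdlib Require Import Arith List.
Import ListNotations.

CoInductive iterm : Type :=
| IVar : nat -> iterm
| IAbs : iterm -> iterm
| IApp : iterm -> iterm -> iterm.

CoInductive ibisim : iterm -> iterm -> Prop :=
| bis_var k : ibisim (IVar k) (IVar k)
| bis_abs t t' : ibisim t t' -> ibisim (IAbs t) (IAbs t')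
| bis_app t u t' u' : ibisim t t' -> ibisim u u' -> ibisim (IApp t u) (IApp t' u').

Inductive ifree : nat -> iterm -> Prop :=
| ifree_var k : ifree k (IVar k)
| ifree_abs k t : ifree (S k) t -> ifree k (IAbs t)
| ifree_appl k t u : ifree k t -> ifree k (IApp t u)
| ifree_appr k t u : ifree k u -> ifree k (IApp t u).

Definition iclosed (t : iterm) : Prop := forall k, ~ ifree k t.

(* decrement the free indices >= c (used when the index c does not occur) *)
CoFixpoint idown (c : nat) (t : iterm) : iterm :=
  match t with
  | IVar k => if k <? c then IVar k else IVar (k - 1)
  | IAbs t => IAbs (idown (S c) t)
  | IApp t u => IApp (idown c t) (idown c u)
  end.

(* A prefixed term  \x1...xn. M  is represented by (n, M): the prefix   *)
(* variables are the de Bruijn indices 0..n-1 of M, index 0 being x_n. *)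

Definition pterm : Type := (nat * iterm)%type.

Definition pbisim (p q : pterm) : Prop := fst p = fst q /\ ibisim (snd p) (snd q).

Inductive reg_label : Type := RLam | RAppL | RAppR | RDel.

Inductive reg_step : pterm -> reg_label -> pterm -> Prop :=
| reg_lam n t : reg_step (n, IAbs t) RLam (S n, t)
| reg_appl n t u : reg_step (n, IApp t u) RAppL (n, t)
| reg_appr n t u : reg_step (n, IApp t u) RAppR (n, u)
| reg_del n t : ~ ifree 0 t -> reg_step (S n, t) RDel (n, idown 0 t).

Inductive reg_seq (p0 : pterm) : list reg_label -> pterm -> Prop :=
| rs_nil : reg_seq p0 [] p0
| rs_snoc l p a q : reg_seq p0 l p -> reg_step p a q -> reg_seq p0 (l ++ [a]) q.

(* A (history-aware) strategy: to every finite rewrite sequence (from the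
   start term, given by its step labels) it assigns a set of steps. *)
Definition strategy : Type := list reg_label -> reg_label -> Prop.

Definition scope_delimiting (S : strategy) (p0 : pterm) : Prop :=
  forall l p, reg_seq p0 l p ->
    (exists a q, reg_step p a q) ->
    (exists a, S l a) /\ (forall a, S l a -> exists q, reg_step p a q).

Inductive follows (S : strategy) (p0 : pterm) : list reg_label -> pterm -> Prop :=
| fol_nil : follows S p0 [] p0
| fol_snoc l p a q : follows S p0 l p -> S l a -> reg_step p a q ->
    follows S p0 (l ++ [a]) q.

Definition GST (S : strategy) (M : iterm) (p : pterm) : Prop :=
  exists l, follows S (0, M) l p.

Definition finite_pset (P : pterm -> Prop) : Prop :=
  exists ps : list pterm, forall p, P p -> exists q, In q ps /\ pbisim p q.

Definition strongly_regular (M : iterm) : Prop :=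
  exists S : strategy, scope_delimiting S (0, M) /\ finite_pset (GST S M).

(* lambda-letrec terms (de Bruijn). [LLet bs t] with n = length bs     *)
(* binds the indices 0..n-1 (index i = recursion variable f_{i+1})    *)
(* in every body of bs and in t.                                        *)

Inductive lterm : Type :=
| LVar : nat -> lterm
| LLam : lterm -> lterm
| LApp : lterm -> lterm -> lterm
| LLet : list lterm -> lterm -> lterm.

Definition up (n : nat) (f : nat -> nat) (k : nat) : nat :=
  if k <? n then k else n + f (k - n).

Fixpoint rename (f : nat -> nat) (t : lterm) : lterm :=
  match t with
  | LVar k => LVar (f k)
  | LLam t => LLam (rename (up 1 f) t)
  | LApp t u => LApp (rename f t) (rename f u)
  | LLet bs t => LLet (map (rename (up (length bs) f)) bs)
                      (rename (up (length bs) f) t)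
  end.

Fixpoint occursb (i : nat) (t : lterm) : bool :=
  match t with
  | LVar k => Nat.eqb k i
  | LLam t => occursb (S i) t
  | LApp t u => occursb i t || occursb i u
  | LLet bs t => existsb (occursb (i + length bs)) bs || occursb (i + length bs) t
  end.

(* index permutation for pushing letrec (n bindings) into an abstraction:
   inside [LLet bs (LLam t)], in t: 0 = lambda var, 1..n = bindings;
   inside [LLam (LLet bs' t')], in t': 0..n-1 = bindings, n = lambda var. *)
Definition push_perm (n k : nat) : nat :=
  if k =? 0 then n else if k <=? n then k - 1 else k.

Definition count_true (m : list bool) : nat := length (filter (fun b => b) m).

(* renaming after keeping the bindings selected by mask (length n) *)
Definition gc_ren (n : nat) (mask : list bool) (k : nat) : nat :=
  if k <? n then count_true (firstn k mask) else k - n + count_true mask.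

Definition kept (bs : list lterm) (mask : list bool) : list lterm :=
  map fst (filter snd (combine bs mask)).

Inductive unf_root : lterm -> lterm -> Prop :=
| unf_app bs t u :
    unf_root (LLet bs (LApp t u)) (LApp (LLet bs t) (LLet bs u))
| unf_lam bs t :
    unf_root (LLet bs (LLam t))
      (LLam (LLet (map (rename (up (length bs) S)) bs)
                  (rename (push_perm (length bs)) t)))
| unf_rec bs i :
    i < length bs ->
    unf_root (LLet bs (LVar i)) (LLet bs (nth i bs (LVar 0)))
| unf_merge bs1 bs2 t :
    unf_root (LLet bs1 (LLet bs2 t))
      (LLet (bs2 ++ map (rename (fun k => k + length bs2)) bs1) t)
| unf_gc bs t mask :
    length mask = length bs ->
    (forall i, i < length bs -> nth i mask true = false ->
       occursb i t = false /\
       forall j, j < length bs -> nth j mask true = true ->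
         occursb i (nth j bs (LVar 0)) = false) ->
    unf_root (LLet bs t)
      (LLet (map (rename (gc_ren (length bs) mask)) (kept bs mask))
            (rename (gc_ren (length bs) mask) t))
| unf_nil t : unf_root (LLet [] t) t.

Inductive unf_step : nat -> lterm -> lterm -> Prop :=
| us_root s t : unf_root s t -> unf_step 0 s t
| us_lam d s t : unf_step d s t -> unf_step (S d) (LLam s) (LLam t)
| us_appl d s t u : unf_step d s t -> unf_step (S d) (LApp s u) (LApp t u)
| us_appr d s t u : unf_step d s t -> unf_step (S d) (LApp u s) (LApp u t)
| us_letin d bs s t : unf_step d s t -> unf_step (S d) (LLet bs s) (LLet bs t)
| us_letbind d bs1 bs2 s t b : unf_step d s t ->
    unf_step (S d) (LLet (bs1 ++ s :: bs2) b) (LLet (bs1 ++ t :: bs2) b).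

(* t and M coincide up to depth D (letrec nodes never agree with lambda nodes) *)
Fixpoint agree (D : nat) (t : lterm) (M : iterm) : Prop :=
  match D with
  | 0 => True
  | S D =>
    match t, M with
    | LVar k, IVar k' => k = k'
    | LLam t, IAbs M => agree D t M
    | LApp t u, IApp M N => agree D t M /\ agree D u N
    | _, _ => False
    end
  end.

(* L unfolds to M: a strongly convergent rewrite sequence of length <= omega
   (steps[i] = None means the sequence has already ended: ts (S i) = ts i). *)
Definition unfolds_to (L : lterm) (M : iterm) : Prop :=
  exists (ts : nat -> lterm) (steps : nat -> option nat),
    ts 0 = L /\
    (forall i, match steps i with
               | None => ts (S i) = ts i /\ steps (S i) = None
               | Some d => unf_step d (ts i) (ts (S i))
               end) /\
    (forall D, exists N, forall i, N <= i ->
        (forall d, steps i = Some d -> D <= d) /\ agree D (ts i) M).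

Definition letrec_expressible (M : iterm) : Prop :=
  exists L : lterm, unfolds_to L M.

(* Main.v *)
Require Import Defs.
From Stdlib Require Import Arith List Lia Bool Classical.
Import ListNotations.


Inductive entry := ELam | ELet (bs : list lterm).
Inductive sentry := SLam (o : option nat) | SLet (bs : list lterm).
Inductive lk := LkNone | LkVar (j : nat) | LkBody (b : lterm) (tau : list sentry).

Fixpoint lookup (i : nat) (s : list sentry) : lk :=
  match s with
  | [] => LkNone
  | SLam o :: s' => match i with 0 => match o with Some j => LkVar j | None => LkNone end
                              | S i' => lookup i' s' end
  | SLet bs :: s' => if i <? length bs then LkBody (nth i bs (LVar 0)) s
                     else lookup (i - length bs) s'
  end.

Definition closure := (lterm * list sentry)%type.

Definition lkshape (l1 l2 : lk) : Prop :=
  match l1, l2 with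
  | LkNone, LkNone => True
  | LkVar a, LkVar b => a = b
  | LkBody _ _, LkBody _ _ => True
  | _, _ => False
  end.

Definition envG (R : closure -> closure -> Prop) (P : nat -> Prop) (f : nat -> nat)
  (s1 s2 : list sentry) :=
 (forall i, P i -> lkshape (lookup i s1) (lookup (f i) s2)) /\
 (forall i b1 t1 b2 t2, P i -> lookup i s1 = LkBody b1 t1 -> lookup (f i) s2 = LkBody b2 t2 ->
    R (b1,t1) (b2,t2)).

Inductive crelF (R : closure -> closure -> Prop) : closure -> closure -> Prop :=
| fr_ren (P : nat -> Prop) f t s1 s2 :
    (forall i, occursb i t = true -> P i) -> envG R P f s1 s2 ->
    crelF R (t, s1) (rename f t, s2)
| fr_id t s1 s2 : envG R (fun _ => True) (fun i => i) s1 s2 -> crelF R (t, s1) (t, s2)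
| fr_step d t1 t2 s1 s2 : unf_step d t1 t2 -> envG R (fun _ => True) (fun i => i) s1 s2 ->
    crelF R (t1, s1) (t2, s2)
| fr_letR bs t1 t2 s1 s2 : R (t1,s1) (t2, SLet bs :: s2) -> crelF R (t1,s1) (LLet bs t2, s2).

CoInductive crel (c1 c2 : closure) : Prop :=
| crel_fold : crelF crel c1 c2 -> crel c1 c2.

Lemma crel_unfold c1 c2 : crel c1 c2 -> crelF crel c1 c2.
Proof. intros []; assumption. Qed.

Lemma envG_mono (R R' : closure -> closure -> Prop) P f s1 s2 :
  (forall a b, R a b -> R' a b) -> envG R P f s1 s2 -> envG R' P f s1 s2.
Proof. intros HR [H1 H2]; split; eauto. Qed.

Lemma crel_coind (X : closure -> closure -> Prop) :
  (forall c1 c2, X c1 c2 -> crelF (fun a b => X a b \/ crel a b) c1 c2) ->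
  forall c1 c2, X c1 c2 -> crel c1 c2.
Proof.
  intros HX. cofix CH. intros c1 c2 Hx. constructor.
  destruct (HX c1 c2 Hx) as [P f t s1 s2 Ho [Hs Hb]|t s1 s2 [Hs Hb]|d t1 t2 s1 s2 Hst [Hs Hb]|bs t1 t2 s1 s2 Hr].
  - apply fr_ren with P; auto. split; auto. intros i b1 t1 b2 t2 Hp E1 E2.
    destruct (Hb i b1 t1 b2 t2 Hp E1 E2) as [Hx'|Hc]; [exact (CH _ _ Hx')|exact Hc].
  - apply fr_id. split; auto. intros i b1 t1 b2 t2 Hp E1 E2.
    destruct (Hb i b1 t1 b2 t2 Hp E1 E2) as [Hx'|Hc]; [exact (CH _ _ Hx')|exact Hc].
  - apply fr_step with d; auto. split; auto. intros i b1 t1' b2 t2' Hp E1 E2.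
    destruct (Hb i b1 t1' b2 t2' Hp E1 E2) as [Hx'|Hc]; [exact (CH _ _ Hx')|exact Hc].
  - apply fr_letR. destruct Hr as [Hx'|Hc]; [exact (CH _ _ Hx')|exact Hc].
Qed.

Lemma crelF_mono (R R' : closure -> closure -> Prop) c1 c2 :
  (forall a b, R a b -> R' a b) -> crelF R c1 c2 -> crelF R' c1 c2.
Proof.
  intros HR H; destruct H.
  - eapply fr_ren; eauto using envG_mono.
  - eapply fr_id; eauto using envG_mono.
  - eapply fr_step; eauto using envG_mono.
  - eapply fr_letR; eauto.
Qed.

Lemma crel_refl c : crel c c.
Proof.
  refine (crel_coind (fun a b => a = b) _ c c eq_refl).
  intros [t s] c2 <-. apply fr_id. split.
  - intros i _. destruct (lookup i s); simpl; auto.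
  - intros i b1 t1 b2 t2 _ E1 E2. rewrite E1 in E2. inversion E2; subst. left; reflexivity.
Qed.

Lemma envG_sub R (P P' : nat -> Prop) f s1 s2 :
  (forall i, P' i -> P i) -> envG R P f s1 s2 -> envG R P' f s1 s2.
Proof. intros HP [H1 H2]; split; eauto. Qed.

Lemma envG_ext R (P : nat -> Prop) f g s1 s2 :
  (forall i, P i -> f i = g i) -> envG R P f s1 s2 -> envG R P g s1 s2.
Proof.
  intros Hfg [H1 H2]; split.
  - intros i Hp. rewrite <- Hfg; auto.
  - intros i b1 t1 b2 t2 Hp E1 E2. rewrite <- Hfg in E2; eauto.
Qed.

Definition shiftE (x : sentry) : sentry :=
  match x with SLam (Some j) => SLam (Some (S j)) | e => e end.
Definition shift (s : list sentry) := map shiftE s.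
Definition lamS (s : list sentry) := SLam (Some 0) :: shift s.

Definition shiftlk (l : lk) : lk :=
  match l with LkBody b t => LkBody b (shift t) | LkVar j => LkVar (S j) | LkNone => LkNone end.

Lemma lookup_shift i s : lookup i (shift s) = shiftlk (lookup i s).
Proof.
  revert i; induction s as [|[[j|]|bs] s IH]; intros i; simpl; auto.
  - destruct i; simpl; auto.
  - destruct i; simpl; auto.
  - destruct (i <? length bs); simpl; auto.
Qed.

Lemma envG_shift R R' P f s1 s2 :
  (forall b1 t1 b2 t2, R (b1,t1) (b2,t2) -> R' (b1, shift t1) (b2, shift t2)) ->
  envG R P f s1 s2 -> envG R' P f (shift s1) (shift s2).
Proof.
  intros HR [H1 H2]; split.
  - intros i Hp. rewrite !lookup_shift. specialize (H1 i Hp).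
    destruct (lookup i s1), (lookup (f i) s2); simpl in *; auto.
  - intros i b1 t1 b2 t2 Hp E1 E2. rewrite lookup_shift in E1, E2.
    destruct (lookup i s1) eqn:F1; try discriminate.
    destruct (lookup (f i) s2) eqn:F2; try discriminate.
    simpl in E1, E2. inversion E1; inversion E2; subst. apply HR. eauto.
Qed.

Lemma crel_shift t1 s1 t2 s2 : crel (t1,s1) (t2,s2) -> crel (t1, shift s1) (t2, shift s2).
Proof.
  intros H.
  apply (crel_coind (fun c1 c2 => exists t1 s1 t2 s2, c1 = (t1, shift s1) /\
           c2 = (t2, shift s2) /\ crel (t1,s1) (t2,s2))).
  2: { exists t1, s1, t2, s2; auto. }
  clear. intros c1 c2 (t1 & s1 & t2 & s2 & -> & -> & H).
  apply crel_unfold in H. inversion H; subst.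
  - apply fr_ren with P; auto. eapply envG_shift; [|eassumption].
    intros; left; do 4 eexists; eauto.
  - apply fr_id. eapply envG_shift; [|eassumption].
    intros; left; do 4 eexists; eauto.
  - apply fr_step with d; auto. eapply envG_shift; [|eassumption].
    intros; left; do 4 eexists; eauto.
  - apply fr_letR. left. do 4 eexists. split; [reflexivity|]. split; [|eassumption]. reflexivity.
Qed.

Lemma envG_lam P P' f s1 s2 :
  envG crel P f s1 s2 ->
  (forall i, P' i -> i = 0 \/ P (i - 1)) ->
  envG crel P' (up 1 f) (lamS s1) (lamS s2).
Proof.
  intros HE HP.
  assert (HE' : envG crel P f (shift s1) (shift s2)).
  { eapply envG_shift; [|exact HE]. intros; apply crel_shift; auto. }
  destruct HE' as [H1 H2]. split.
  - intros [|i] Hp; simpl; auto.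
    destruct (HP _ Hp) as [E|E]; [discriminate|]. simpl in E. rewrite Nat.sub_0_r in E.
    unfold up; simpl. rewrite Nat.sub_0_r. apply H1; auto.
  - intros [|i] b1 t1 b2 t2 Hp E1 E2; simpl in E1; [discriminate|].
    destruct (HP _ Hp) as [E|E]; [discriminate|]. simpl in E. rewrite Nat.sub_0_r in E.
    unfold up in E2; simpl in E2. rewrite Nat.sub_0_r in E2. eauto.
Qed.

Lemma envI_lam s1 s2 :
  envG crel (fun _ => True) (fun i => i) s1 s2 ->
  envG crel (fun _ => True) (fun i => i) (lamS s1) (lamS s2).
Proof.
  intros H. eapply envG_ext; [|eapply envG_lam; [exact H|]].
  - intros [|i] _; unfold up; simpl; auto. rewrite Nat.sub_0_r; auto.
  - intros; right; auto.
Qed.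

Lemma envI_nil R s1 s2 :
  envG R (fun _ => True) (fun i => i) s1 s2 ->
  envG R (fun _ => True) (fun i => i) (SLet [] :: s1) s2.
Proof.
  intros [H1 H2]; split; intros i; simpl; rewrite Nat.sub_0_r; eauto.
Qed.


Notation envI R s1 s2 := (envG R (fun _ => True) (fun i => i) s1 s2).

Lemma lookup_let_lt i bs s : i < length bs ->
  lookup i (SLet bs :: s) = LkBody (nth i bs (LVar 0)) (SLet bs :: s).
Proof. intros H. simpl. apply Nat.ltb_lt in H. rewrite H. reflexivity. Qed.

Lemma lookup_let_ge i bs s : length bs <= i ->
  lookup i (SLet bs :: s) = lookup (i - length bs) s.
Proof. intros H. simpl. destruct (Nat.ltb_spec i (length bs)); [lia|reflexivity]. Qed.

Lemma nth_map_lt (g : lterm -> lterm) bs i : i < length bs ->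
  nth i (map g bs) (LVar 0) = g (nth i bs (LVar 0)).
Proof.
  intros H. rewrite nth_indep with (d' := g (LVar 0)) by (rewrite length_map; auto).
  apply map_nth.
Qed.

Lemma up_lt n f i : i < n -> up n f i = i.
Proof. intros H; unfold up. apply Nat.ltb_lt in H; rewrite H; auto. Qed.
Lemma up_ge n f i : n <= i -> up n f i = n + f (i - n).
Proof. intros H; unfold up. destruct (Nat.ltb_spec i n); [lia|auto]. Qed.

Lemma envG_let_gen (R : closure -> closure -> Prop) s1 s2 B1 B2 :
  envI R s1 s2 -> length B1 = length B2 ->
  (forall i, i < length B1 -> R (nth i B1 (LVar 0), SLet B1 :: s1) (nth i B2 (LVar 0), SLet B2 :: s2)) ->
  envI R (SLet B1 :: s1) (SLet B2 :: s2).
Proof.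
  intros [H1 H2] HL HB; split.
  - intros i _. destruct (Nat.lt_ge_cases i (length B1)).
    + rewrite lookup_let_lt, lookup_let_lt by lia. simpl; auto.
    + rewrite lookup_let_ge, lookup_let_ge by lia. rewrite HL. auto.
  - intros i b1 t1 b2 t2 _ E1 E2. destruct (Nat.lt_ge_cases i (length B1)).
    + rewrite lookup_let_lt in E1, E2 by lia. inversion E1; inversion E2; subst. auto.
    + rewrite lookup_let_ge in E1, E2 by lia. rewrite HL in E1. eauto.
Qed.

Lemma envI_let s1 s2 B1 B2 :
  envI crel s1 s2 -> length B1 = length B2 ->
  (forall i, i < length B1 -> nth i B1 (LVar 0) = nth i B2 (LVar 0) \/
       exists d, unf_step d (nth i B1 (LVar 0)) (nth i B2 (LVar 0))) ->
  envI crel (SLet B1 :: s1) (SLet B2 :: s2).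
Proof.
  intros HE HL HB.
  set (X := fun c1 c2 => exists i, i < length B1 /\ c1 = (nth i B1 (LVar 0), SLet B1 :: s1)
                                /\ c2 = (nth i B2 (LVar 0), SLet B2 :: s2)).
  assert (HX : forall c1 c2, X c1 c2 -> crel c1 c2).
  { apply crel_coind. intros c1 c2 (i & Hi & -> & ->).
    assert (HE' : envI (fun a b => X a b \/ crel a b) (SLet B1 :: s1) (SLet B2 :: s2)).
    { apply envG_let_gen; auto. eapply envG_mono; [|exact HE]. auto.
      intros j Hj; left; exists j; auto. }
    destruct (HB i Hi) as [E|[d Hd]].
    - rewrite E. apply fr_id. exact HE'.
    - eapply fr_step; eauto. }
  apply envG_let_gen; auto. intros i Hi; apply HX; exists i; auto.
Qed.

Lemma envI_letsame s1 s2 B :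
  envI crel s1 s2 -> envI crel (SLet B :: s1) (SLet B :: s2).
Proof. intros; apply envI_let; auto. Qed.

Lemma envG_letren_gen (R : closure -> closure -> Prop) (P Q : nat -> Prop) f s1 s2 bs :
  envG R P f s1 s2 ->
  (forall i, Q i -> i < length bs \/ P (i - length bs)) ->
  (forall i, i < length bs -> R (nth i bs (LVar 0), SLet bs :: s1)
       (rename (up (length bs) f) (nth i bs (LVar 0)),
        SLet (map (rename (up (length bs) f)) bs) :: s2)) ->
  envG R Q (up (length bs) f) (SLet bs :: s1) (SLet (map (rename (up (length bs) f)) bs) :: s2).
Proof.
  intros [H1 H2] HQ HB. set (n := length bs) in *.
  assert (Hn : length (map (rename (up n f)) bs) = n) by (rewrite length_map; auto).
  split.
  - intros i Hq. destruct (Nat.lt_ge_cases i n).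
    + rewrite up_lt by auto. rewrite lookup_let_lt, lookup_let_lt by lia. simpl; auto.
    + destruct (HQ i Hq) as [|Hp]; [lia|].
      rewrite up_ge by auto. rewrite lookup_let_ge by lia. rewrite lookup_let_ge by lia.
      rewrite Hn. replace (n + f (i - n) - n) with (f (i - n)) by lia. auto.
  - intros i b1 t1 b2 t2 Hq E1 E2. destruct (Nat.lt_ge_cases i n).
    + rewrite up_lt in E2 by auto. rewrite lookup_let_lt in E1, E2 by lia.
      inversion E1; inversion E2; subst. rewrite nth_map_lt by auto. apply HB; auto.
    + destruct (HQ i Hq) as [|Hp]; [lia|].
      rewrite up_ge in E2 by auto. rewrite lookup_let_ge in E1 by lia. rewrite lookup_let_ge in E2 by lia.
      rewrite Hn in E2. replace (n + f (i - n) - n) with (f (i - n)) in E2 by lia. eauto.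
Qed.

Lemma letren_bodies P f s1 s2 bs :
  envG crel P f s1 s2 ->
  (forall b i, In b bs -> occursb (i + length bs) b = true -> P i) ->
  forall i, i < length bs -> crel (nth i bs (LVar 0), SLet bs :: s1)
       (rename (up (length bs) f) (nth i bs (LVar 0)),
        SLet (map (rename (up (length bs) f)) bs) :: s2).
Proof.
  intros HE HO.
  set (X := fun c1 c2 => exists i, i < length bs /\ c1 = (nth i bs (LVar 0), SLet bs :: s1)
      /\ c2 = (rename (up (length bs) f) (nth i bs (LVar 0)),
        SLet (map (rename (up (length bs) f)) bs) :: s2)).
  assert (HX : forall c1 c2, X c1 c2 -> crel c1 c2).
  { apply crel_coind. intros c1 c2 (i & Hi & -> & ->).
    apply fr_ren with (P := fun j => occursb j (nth i bs (LVar 0)) = true); auto.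
    apply envG_letren_gen with (P := P).
    - eapply envG_mono; [|exact HE]. auto.
    - intros j Hj. destruct (Nat.lt_ge_cases j (length bs)); [left; auto|right].
      apply HO with (nth i bs (LVar 0)); [apply nth_In; auto|].
      replace (j - length bs + length bs) with j by lia. auto.
    - intros j Hj. left. exists j; auto. }
  intros i Hi; apply HX; exists i; auto.
Qed.

Lemma envG_letren P Q f s1 s2 bs :
  envG crel P f s1 s2 ->
  (forall b i, In b bs -> occursb (i + length bs) b = true -> P i) ->
  (forall i, Q i -> i < length bs \/ P (i - length bs)) ->
  envG crel Q (up (length bs) f) (SLet bs :: s1) (SLet (map (rename (up (length bs) f)) bs) :: s2).
Proof.
  intros HE HO HQ. apply envG_letren_gen with P; auto.
  apply letren_bodies with P; auto.
Qed.


Lemma envI_shift s1 s2 : envI crel s1 s2 -> envI crel (shift s1) (shift s2).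
Proof. intros H; eapply envG_shift; [|exact H]. intros; apply crel_shift; auto. Qed.

Lemma pp0 n : push_perm n 0 = n.
Proof. reflexivity. Qed.
Lemma ppS_le n i : S i <= n -> push_perm n (S i) = i.
Proof. intros H. unfold push_perm. destruct n; [lia|]. simpl. destruct (Nat.leb_spec i n); lia. Qed.
Lemma ppS_gt n i : n < S i -> push_perm n (S i) = S i.
Proof. intros H. unfold push_perm. simpl. destruct n; simpl; auto. destruct (Nat.leb_spec i n); [lia|auto]. Qed.
Lemma lookup_lam_S i o s : lookup (S i) (SLam o :: s) = lookup i s.
Proof. reflexivity. Qed.

Lemma envG_lampush s1 s2 bs :
  envI crel s1 s2 ->
  envG crel (fun _ => True) (push_perm (length bs))
    (SLam (Some 0) :: SLet bs :: shift s1)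
    (SLet (map (rename (up (length bs) S)) bs) :: SLam (Some 0) :: shift s2).
Proof.
  intros HE. pose proof (envI_shift _ _ HE) as HS. set (n := length bs).
  assert (H0 : envG crel (fun _ => True) S (shift s1) (SLam (Some 0) :: shift s2)).
  { destruct HS as [A1 A2]; split; simpl; eauto. }
  pose proof (letren_bodies _ _ _ _ bs H0 (fun _ _ _ _ => I)) as HB. fold n in HB.
  assert (Hn : length (map (rename (up n S)) bs) = n) by (rewrite length_map; auto).
  destruct HS as [A1 A2]. split.
  - intros [|i] _.
    + rewrite pp0. rewrite lookup_let_ge by lia. rewrite Hn, Nat.sub_diag. simpl; auto.
    + rewrite lookup_lam_S. destruct (Nat.le_gt_cases (S i) n).
      * rewrite ppS_le by auto. rewrite !lookup_let_lt by lia. simpl; auto.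
      * rewrite ppS_gt by auto. rewrite lookup_let_ge by lia. rewrite lookup_let_ge by lia. rewrite Hn.
        replace (S i - n) with (S (i - n)) by lia. rewrite lookup_lam_S. auto.
  - intros [|i] b1 t1 b2 t2 _ E1 E2; [simpl in E1; discriminate|].
    rewrite lookup_lam_S in E1. destruct (Nat.le_gt_cases (S i) n).
    + rewrite ppS_le in E2 by auto.
      rewrite lookup_let_lt in E1, E2 by lia. inversion E1; inversion E2; subst.
      rewrite nth_map_lt by lia. apply HB; lia.
    + rewrite ppS_gt in E2 by auto. rewrite lookup_let_ge in E1 by lia. rewrite lookup_let_ge in E2 by lia.
      rewrite Hn in E2. replace (S i - n) with (S (i - n)) in E2 by lia. rewrite lookup_lam_S in E2. eauto.
Qed.

Section Merge.
Variables (s1 s2 : list sentry) (bs1 bs2 : list lterm).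
Let m := length bs2.
Let B := bs2 ++ map (rename (fun k => k + m)) bs1.
Hypothesis HE : envI crel s1 s2.

Lemma lenB : length B = m + length bs1.
Proof. unfold B. rewrite length_app, length_map. auto. Qed.

Lemma nthB1 i : i < length bs1 -> nth (i + m) B (LVar 0) = rename (fun k => k + m) (nth i bs1 (LVar 0)).
Proof.
  intros H. unfold B. rewrite app_nth2 by lia. fold m. replace (i + m - m) with i by lia.
  apply nth_map_lt; auto.
Qed.

Lemma nthB2 i : i < m -> nth i B (LVar 0) = nth i bs2 (LVar 0).
Proof. intros H. unfold B. apply app_nth1. auto. Qed.

Lemma merge_B : forall i, i < length bs1 ->
  crel (nth i bs1 (LVar 0), SLet bs1 :: s1) (rename (fun k => k + m) (nth i bs1 (LVar 0)), SLet B :: s2).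
Proof.
  set (X := fun c1 c2 => exists i, i < length bs1 /\ c1 = (nth i bs1 (LVar 0), SLet bs1 :: s1) /\
     c2 = (rename (fun k => k + m) (nth i bs1 (LVar 0)), SLet B :: s2)).
  assert (HX : forall c1 c2, X c1 c2 -> crel c1 c2).
  { apply crel_coind. intros c1 c2 (i & Hi & -> & ->).
    apply fr_ren with (P := fun _ => True); auto.
    destruct HE as [H1 H2]. pose proof lenB as HL. split.
    - intros j _. destruct (Nat.lt_ge_cases j (length bs1)).
      + rewrite !lookup_let_lt by lia. simpl; auto.
      + rewrite !lookup_let_ge by lia. rewrite HL. replace (j + m - (m + length bs1)) with (j - length bs1) by lia. auto.
    - intros j b1 t1 b2 t2 _ E1 E2. destruct (Nat.lt_ge_cases j (length bs1)).
      + rewrite lookup_let_lt in E1, E2 by lia. inversion E1; inversion E2; subst.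
        rewrite nthB1 by auto. left; exists j; auto.
      + rewrite lookup_let_ge in E1, E2 by lia. rewrite HL in E2.
        replace (j + m - (m + length bs1)) with (j - length bs1) in E2 by lia. right; eauto. }
  intros i Hi; apply HX; exists i; auto.
Qed.

Lemma envG_merge_gen (R : closure -> closure -> Prop) :
  envI R s1 s2 ->
  (forall i, i < m -> R (nth i bs2 (LVar 0), SLet bs2 :: SLet bs1 :: s1) (nth i B (LVar 0), SLet B :: s2)) ->
  (forall i, i < length bs1 -> R (nth i bs1 (LVar 0), SLet bs1 :: s1) (nth (i + m) B (LVar 0), SLet B :: s2)) ->
  envI R (SLet bs2 :: SLet bs1 :: s1) (SLet B :: s2).
Proof.
  intros [H1 H2] HA HB'. pose proof lenB as HL. split.
  - intros j _. destruct (Nat.lt_ge_cases j m).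
    + rewrite !lookup_let_lt by lia. simpl; auto.
    + rewrite lookup_let_ge by lia. fold m. destruct (Nat.lt_ge_cases (j - m) (length bs1)).
      * rewrite !lookup_let_lt by lia. simpl; auto.
      * rewrite !lookup_let_ge by lia. rewrite HL. replace (j - m - length bs1) with (j - (m + length bs1)) by lia. auto.
  - intros j b1 t1 b2 t2 _ E1 E2. destruct (Nat.lt_ge_cases j m).
    + rewrite lookup_let_lt in E1, E2 by lia. inversion E1; inversion E2; subst. auto.
    + rewrite lookup_let_ge in E1 by lia. fold m in E1. destruct (Nat.lt_ge_cases (j - m) (length bs1)).
      * rewrite lookup_let_lt in E1, E2 by lia. inversion E1; inversion E2; subst.
        replace j with ((j - m) + m) at 2 by lia. apply HB'; auto.
      * rewrite lookup_let_ge in E1, E2 by lia. rewrite HL in E2.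
        replace (j - m - length bs1) with (j - (m + length bs1)) in E1 by lia. eauto.
Qed.

Lemma envI_merge : envI crel (SLet bs2 :: SLet bs1 :: s1) (SLet B :: s2).
Proof.
  set (X := fun c1 c2 => exists i, i < m /\ c1 = (nth i bs2 (LVar 0), SLet bs2 :: SLet bs1 :: s1) /\
     c2 = (nth i B (LVar 0), SLet B :: s2)).
  assert (HB' : forall i, i < length bs1 -> crel (nth i bs1 (LVar 0), SLet bs1 :: s1) (nth (i + m) B (LVar 0), SLet B :: s2)).
  { intros i Hi. rewrite nthB1 by auto. apply merge_B; auto. }
  assert (HX : forall c1 c2, X c1 c2 -> crel c1 c2).
  { apply crel_coind. intros c1 c2 (i & Hi & -> & ->). rewrite nthB2 by auto. apply fr_id.
    apply envG_merge_gen.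
    - eapply envG_mono; [|exact HE]. auto.
    - intros j Hj; left; exists j; auto.
    - intros j Hj; right; auto. }
  apply envG_merge_gen; auto. intros i Hi; apply HX; exists i; auto.
Qed.
End Merge.


Lemma kept_cons b bs m mask :
  kept (b :: bs) (m :: mask) = if m then b :: kept bs mask else kept bs mask.
Proof. unfold kept; simpl; destruct m; reflexivity. Qed.
Lemma count_cons m l : count_true (m :: l) = (if m then 1 else 0) + count_true l.
Proof. unfold count_true; simpl; destruct m; reflexivity. Qed.

Lemma kept_len bs mask : length mask = length bs -> length (kept bs mask) = count_true mask.
Proof.
  revert mask; induction bs as [|b bs IH]; intros [|m mask] H; simpl in H; try discriminate.
  - reflexivity.
  - rewrite kept_cons, count_cons. destruct m; simpl; rewrite IH; auto.
Qed.

Lemma kept_nth bs mask j : length mask = length bs -> j < length bs -> nth j mask true = true ->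
  count_true (firstn j mask) < length (kept bs mask) /\
  nth (count_true (firstn j mask)) (kept bs mask) (LVar 0) = nth j bs (LVar 0).
Proof.
  revert mask j; induction bs as [|b bs IH]; intros [|m mask] j H Hj Hm; simpl in H; try discriminate.
  - simpl in Hj; lia.
  - rewrite kept_cons. destruct j as [|j].
    + simpl in Hm. subst m. simpl. split; [unfold count_true; simpl; lia|reflexivity].
    + simpl firstn. rewrite count_cons. simpl in Hm, Hj.
      destruct (IH mask j) as [A1 A2]; try lia; auto.
      destruct m; simpl; split; auto; lia.
Qed.

Section GC.
Variables (bs : list lterm) (mask : list bool) (s1 s2 : list sentry).
Let n := length bs.
Let g := gc_ren n mask.
Let K := map (rename g) (kept bs mask).
Hypothesis Hlen : length mask = n.
Hypothesis Hgc : forall i, i < n -> nth i mask true = false ->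
  forall j, j < n -> nth j mask true = true -> occursb i (nth j bs (LVar 0)) = false.
Hypothesis HE : envI crel s1 s2.

Lemma gc_lenK : length K = count_true mask.
Proof. unfold K. rewrite length_map. apply kept_len; auto. Qed.

Lemma gc_nth j : j < n -> nth j mask true = true ->
  g j < length K /\ nth (g j) K (LVar 0) = rename g (nth j bs (LVar 0)).
Proof.
  intros Hj Hm. destruct (kept_nth bs mask j) as [A1 A2]; auto.
  assert (E : g j = count_true (firstn j mask)).
  { unfold g, gc_ren. apply Nat.ltb_lt in Hj. rewrite Hj. auto. }
  rewrite E. unfold K. rewrite length_map. split; auto.
  rewrite nth_map_lt by auto. rewrite A2. auto.
Qed.

Lemma g_ge j : n <= j -> g j = j - n + count_true mask.
Proof. intros H. unfold g, gc_ren. destruct (Nat.ltb_spec j n); [lia|auto]. Qed.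

Lemma envG_gc_gen (R : closure -> closure -> Prop) (Q : nat -> Prop) :
  envI R s1 s2 ->
  (forall j, Q j -> j < n -> nth j mask true = true) ->
  (forall i, i < n -> nth i mask true = true ->
     R (nth i bs (LVar 0), SLet bs :: s1) (rename g (nth i bs (LVar 0)), SLet K :: s2)) ->
  envG R Q g (SLet bs :: s1) (SLet K :: s2).
Proof.
  intros [H1 H2] HQ HB. pose proof gc_lenK as HK. split.
  - intros j Hq. destruct (Nat.lt_ge_cases j n).
    + destruct (gc_nth j) as [B1 B2]; auto.
      rewrite !lookup_let_lt by auto. simpl; auto.
    + rewrite g_ge by auto. rewrite lookup_let_ge by (unfold n in *; lia).
      rewrite lookup_let_ge by lia. rewrite HK. replace (j - n + count_true mask - count_true mask) with (j - n) by lia.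
      apply H1; auto.
  - intros j b1 t1 b2 t2 Hq E1 E2. destruct (Nat.lt_ge_cases j n).
    + destruct (gc_nth j) as [B1 B2]; auto.
      rewrite lookup_let_lt in E1 by auto. rewrite lookup_let_lt in E2 by auto.
      inversion E1; inversion E2; subst. rewrite B2. apply HB; auto.
    + rewrite g_ge in E2 by auto. rewrite lookup_let_ge in E1 by (unfold n in *; lia).
      rewrite lookup_let_ge in E2 by lia. rewrite HK in E2.
      replace (j - n + count_true mask - count_true mask) with (j - n) in E2 by lia. eauto.
Qed.

Lemma gc_bodies : forall i, i < n -> nth i mask true = true ->
  crel (nth i bs (LVar 0), SLet bs :: s1) (rename g (nth i bs (LVar 0)), SLet K :: s2).
Proof.
  set (X := fun c1 c2 => exists i, i < n /\ nth i mask true = true /\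
     c1 = (nth i bs (LVar 0), SLet bs :: s1) /\ c2 = (rename g (nth i bs (LVar 0)), SLet K :: s2)).
  assert (HX : forall c1 c2, X c1 c2 -> crel c1 c2).
  { apply crel_coind. intros c1 c2 (i & Hi & Hm & -> & ->).
    apply fr_ren with (P := fun j => occursb j (nth i bs (LVar 0)) = true); auto.
    apply envG_gc_gen.
    - eapply envG_mono; [|exact HE]. auto.
    - intros j Hj Hjn. destruct (nth j mask true) eqn:Ej; auto.
      rewrite (Hgc j Hjn Ej i Hi Hm) in Hj. discriminate.
    - intros j Hj Hm'. left. exists j; auto. }
  intros i Hi Hm; apply HX; exists i; auto.
Qed.

Lemma envG_gc (t : lterm) :
  (forall j, j < n -> nth j mask true = false -> occursb j t = false) ->
  envG crel (fun j => occursb j t = true) g (SLet bs :: s1) (SLet K :: s2).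
Proof.
  intros Ht. apply envG_gc_gen; auto.
  - intros j Hj Hjn. destruct (nth j mask true) eqn:Ej; auto. rewrite Ht in Hj; auto.
  - apply gc_bodies.
Qed.
End GC.


Inductive head := HLam (t : lterm) (s : list sentry) | HApp (a b : lterm) (s : list sentry) | HVar (j : nat).

Inductive whnf : lterm -> list sentry -> head -> Prop :=
| wh_lam t s : whnf (LLam t) s (HLam t s)
| wh_app a b s : whnf (LApp a b) s (HApp a b s)
| wh_let bs t s h : whnf t (SLet bs :: s) h -> whnf (LLet bs t) s h
| wh_var i s j : lookup i s = LkVar j -> whnf (LVar i) s (HVar j)
| wh_body i s b tau h : lookup i s = LkBody b tau -> whnf b tau h -> whnf (LVar i) s h.

Definition hrel (h1 h2 : head) : Prop :=
  match h1, h2 with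
  | HLam t1 s1, HLam t2 s2 => crel (t1, lamS s1) (t2, lamS s2)
  | HApp a1 b1 s1, HApp a2 b2 s2 => crel (a1, s1) (a2, s2) /\ crel (b1, s1) (b2, s2)
  | HVar j, HVar k => j = k
  | _, _ => False
  end.

Lemma envI_refl s : envI crel s s.
Proof.
  split.
  - intros i _. destruct (lookup i s); simpl; auto.
  - intros i b1 t1 b2 t2 _ E1 E2. rewrite E1 in E2. inversion E2; subst. apply crel_refl.
Qed.

Lemma crel_cases t1 s1 t2 s2 : crel (t1,s1) (t2,s2) ->
 (exists P f, t2 = rename f t1 /\ (forall i, occursb i t1 = true -> P i) /\ envG crel P f s1 s2)
 \/ (t2 = t1 /\ envI crel s1 s2)
 \/ (exists d, unf_step d t1 t2 /\ envI crel s1 s2)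
 \/ (exists bs t2', t2 = LLet bs t2' /\ crel (t1,s1) (t2', SLet bs :: s2)).
Proof.
  intros H. apply crel_unfold in H. inversion H; subst.
  - left. exists P, f; auto.
  - right; left; auto.
  - right; right; left; eauto.
  - right; right; right; eauto.
Qed.

Ltac crinv H := apply crel_cases in H;
  destruct H as [(P & f & Eren & Hocc & Henv)|[(Eeq & Henv)|[(d & Hst & Henv)|(bs' & t2' & Elet & Hcr)]]].

Lemma letbind_nth bs1 bs2 s t d : unf_step d s t -> forall i, i < length (bs1 ++ s :: bs2) ->
  nth i (bs1 ++ s :: bs2) (LVar 0) = nth i (bs1 ++ t :: bs2) (LVar 0) \/
  exists d', unf_step d' (nth i (bs1 ++ s :: bs2) (LVar 0)) (nth i (bs1 ++ t :: bs2) (LVar 0)).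
Proof.
  intros Hst i Hi. destruct (lt_eq_lt_dec i (length bs1)) as [[H|H]|H].
  - left. rewrite !app_nth1 by auto. auto.
  - right. subst. rewrite !nth_middle. eauto.
  - left. rewrite !app_nth2 by lia. destruct (i - length bs1) eqn:E; [lia|]. reflexivity.
Qed.

Lemma sim : forall t2 s2 h2, whnf t2 s2 h2 -> forall t1 s1, crel (t1, s1) (t2, s2) ->
  exists h1, whnf t1 s1 h1 /\ hrel h1 h2.
Proof.
  induction 1 as [t s|a b s|bs t s h Hw IH|i s j Hl|i s b tau h Hl Hw IH];
    intros t1 s1 Hc.
  -
    assert (Hid : forall s1, envI crel s1 s -> exists h1, whnf (LLam t) s1 h1 /\ hrel h1 (HLam t s)).
    { intros s0 He. exists (HLam t s0). split; [constructor|]. simpl.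
      constructor. apply fr_id. apply envI_lam; auto. }
    crinv Hc.
    + destruct t1 as [k|u|a b|bs u]; simpl in Eren; try discriminate. inversion Eren; subst.
      exists (HLam u s1). split; [constructor|]. simpl. constructor.
      apply fr_ren with (P := fun i => occursb i u = true); auto.
      apply envG_lam with P; auto.
      intros [|i] Hi; [left; auto|right]. simpl. rewrite Nat.sub_0_r. apply Hocc. simpl. auto.
    + subst. apply Hid; auto.
    + inversion Hst; subst.
      * match goal with H : unf_root _ _ |- _ => inversion H; subst end.
        -- eexists. split; [constructor; constructor|]. simpl. constructor.
           apply fr_letR. constructor. apply fr_ren with (P := fun _ => True); auto.
           apply envG_lampush; auto.
        -- destruct (Hid (SLet [] :: s1)) as [h1 [A1 A2]]; [apply envI_nil; auto|].
           exists h1; split; auto. constructor; auto.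
      * eexists. split; [constructor|]. simpl. constructor. eapply fr_step; [eassumption|].
        apply envI_lam; auto.
    + discriminate.
  -
    assert (Hid : forall s1, envI crel s1 s -> exists h1, whnf (LApp a b) s1 h1 /\ hrel h1 (HApp a b s)).
    { intros s0 He. exists (HApp a b s0). split; [constructor|]. simpl.
      split; constructor; apply fr_id; auto. }
    crinv Hc.
    + destruct t1 as [k|u|a1 b1|bs u]; simpl in Eren; try discriminate. inversion Eren; subst.
      exists (HApp a1 b1 s1). split; [constructor|]. simpl. split; constructor.
      * apply fr_ren with (P := fun i => occursb i a1 = true); auto.
        eapply envG_sub; [|eassumption]. intros i Hi. apply Hocc. simpl. rewrite Hi. auto.
      * apply fr_ren with (P := fun i => occursb i b1 = true); auto.
        eapply envG_sub; [|eassumption]. intros i Hi. apply Hocc. simpl. rewrite Hi, orb_true_r. auto.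
    + subst. apply Hid; auto.
    + inversion Hst; subst.
      * match goal with H : unf_root _ _ |- _ => inversion H; subst end.
        -- eexists. split; [constructor; constructor|]. simpl. split; constructor;
             apply fr_letR; constructor; apply fr_id; apply envI_letsame; auto.
        -- destruct (Hid (SLet [] :: s1)) as [h1 [A1 A2]]; [apply envI_nil; auto|].
           exists h1; split; auto. constructor; auto.
      * eexists. split; [constructor|]. simpl. split; constructor.
        -- eapply fr_step; eauto.
        -- apply fr_id; auto.
      * eexists. split; [constructor|]. simpl. split; constructor.
        -- apply fr_id; auto.
        -- eapply fr_step; eauto.
    + discriminate.
  -
    assert (Hid : forall s1, envI crel s1 s -> exists h1, whnf (LLet bs t) s1 h1 /\ hrel h1 h).
    { intros s0 He. destruct (IH t (SLet bs :: s0)) as [h1 [A1 A2]].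
      - constructor. apply fr_id. apply envI_letsame; auto.
      - exists h1; split; auto. constructor; auto. }
    crinv Hc.
    + destruct t1 as [k|u|a1 b1|l u]; simpl in Eren; try discriminate. inversion Eren; subst.
      destruct (IH u (SLet l :: s1)) as [h1 [A1 A2]].
      * constructor. apply fr_ren with (P := fun i => occursb i u = true); auto.
        apply envG_letren with P; auto.
        -- intros b0 i Hb Ho. apply Hocc. simpl. apply orb_true_intro. left.
           apply existsb_exists. exists b0; auto.
        -- intros i Hi. destruct (Nat.lt_ge_cases i (length l)); [left; auto|right].
           apply Hocc. simpl. replace (i - length l + length l) with i by lia. rewrite Hi, orb_true_r. auto.
      * exists h1; split; auto. constructor; auto.
    + subst. apply Hid; auto.
    + inversion Hst; subst.
      * match goal with H : unf_root _ _ |- _ => inversion H; subst end.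
        --
           match goal with Hi : ?i < length bs |- _ =>
           destruct (IH (nth i bs (LVar 0)) (SLet bs :: s1)) as [h1 [A1 A2]];
           [ constructor; apply fr_id; apply envI_letsame; auto
           | exists h1; split; auto; constructor; eapply wh_body; [|exact A1];
             apply lookup_let_lt; auto ] end.
        --
           match goal with |- exists _, whnf (LLet ?b1 (LLet ?b2 ?u)) _ _ /\ _ =>
           destruct (IH u (SLet b2 :: SLet b1 :: s1)) as [h1 [A1 A2]];
           [ constructor; apply fr_id; apply envI_merge; auto
           | exists h1; split; auto; do 2 constructor; auto ] end.
        --
           match goal with
           | Hg : forall i, i < length ?b0 -> nth i ?mask true = false -> _ /\ _,
             Hlen : length ?mask = length ?b0 |- exists _, whnf (LLet ?b0 ?u) _ _ /\ _ =>
           destruct (IH u (SLet b0 :: s1)) as [h1 [A1 A2]];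
           [ constructor; apply fr_ren with (P := fun i => occursb i u = true); auto;
             apply envG_gc; auto;
             [ intros i Hi Hm j Hj Hm'; apply (proj2 (Hg i Hi Hm)); auto
             | intros j Hj Hm; apply (proj1 (Hg j Hj Hm)) ]
           | exists h1; split; auto; constructor; auto ] end.
        -- destruct (Hid (SLet [] :: s1)) as [h1 [A1 A2]]; [apply envI_nil; auto|].
           exists h1; split; auto. constructor; auto.
      * match goal with |- exists _, whnf (LLet ?b ?u) _ _ /\ _ =>
        destruct (IH u (SLet b :: s1)) as [h1 [A1 A2]];
        [ constructor; eapply fr_step; [eassumption|]; apply envI_letsame; auto
        | exists h1; split; auto; constructor; auto ] end.
      * match goal with |- exists _, whnf (LLet ?B1 ?u) _ _ /\ _ =>
        destruct (IH u (SLet B1 :: s1)) as [h1 [A1 A2]];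
        [ constructor; apply fr_id; apply envI_let; auto
        | exists h1; split; auto; constructor; auto ] end.
        -- rewrite !length_app; simpl; auto.
        -- eapply letbind_nth; eassumption.
    + inversion Elet; subst. destruct (IH t1 s1) as [h1 [A1 A2]]; auto.
  -
    assert (Hid : forall s1, envI crel s1 s -> exists h1, whnf (LVar i) s1 h1 /\ hrel h1 (HVar j)).
    { intros s0 [He1 He2]. specialize (He1 i I). rewrite Hl in He1.
      destruct (lookup i s0) eqn:E; simpl in He1; try contradiction. subst.
      exists (HVar j); split; [constructor; auto|simpl; auto]. }
    crinv Hc.
    + destruct t1 as [k|u|a1 b1|l u]; simpl in Eren; try discriminate. inversion Eren; subst.
      destruct Henv as [He1 He2]. assert (Hk : P k) by (apply Hocc; simpl; apply Nat.eqb_refl).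
      specialize (He1 k Hk). rewrite Hl in He1.
      destruct (lookup k s1) eqn:E; simpl in He1; try contradiction. subst.
      exists (HVar j); split; [constructor; auto|simpl; auto].
    + subst. apply Hid; auto.
    + inversion Hst; subst.
      match goal with H : unf_root _ _ |- _ => inversion H; subst end.
      destruct (Hid (SLet [] :: s1)) as [h1 [A1 A2]]; [apply envI_nil; auto|].
      exists h1; split; auto. constructor; auto.
    + discriminate.
  -
    assert (Hgen : forall k s0 P f, P k -> envG crel P f s0 s -> f k = i ->
              exists h1, whnf (LVar k) s0 h1 /\ hrel h1 h).
    { intros k s0 P f Hk [He1 He2] Hf. specialize (He1 k Hk). subst i. rewrite Hl in He1.
      destruct (lookup k s0) eqn:E; simpl in He1; try contradiction.
      specialize (He2 k b0 tau0 b tau Hk E Hl).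
      destruct (IH b0 tau0 He2) as [h1 [A1 A2]].
      exists h1; split; auto. eapply wh_body; eauto. }
    crinv Hc.
    + destruct t1 as [k|u|a1 b1|l u]; simpl in Eren; try discriminate. inversion Eren; subst.
      eapply Hgen; eauto. apply Hocc; simpl; apply Nat.eqb_refl.
    + subst. eapply Hgen; eauto. exact I.
    + inversion Hst; subst.
      match goal with H : unf_root _ _ |- _ => inversion H; subst end.
      destruct (Hgen i (SLet [] :: s1) (fun _ => True) (fun i => i)) as [h1 [A1 A2]]; auto.
      apply envI_nil; auto.
      exists h1; split; auto. constructor; auto.
    + discriminate.
Qed.


Fixpoint denD (D : nat) (t : lterm) (s : list sentry) (N : iterm) : Prop :=
  match D with
  | 0 => True
  | S D' => exists h, whnf t s h /\
      match h, N with
      | HLam t' s', IAbs N' => denD D' t' (lamS s') N'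
      | HApp a b s', IApp A B => denD D' a s' A /\ denD D' b s' B
      | HVar j, IVar k => j = k
      | _, _ => False
      end
  end.

Lemma back D : forall t1 s1 t2 s2 N, crel (t1, s1) (t2, s2) -> denD D t2 s2 N -> denD D t1 s1 N.
Proof.
  induction D as [|D IH]; intros t1 s1 t2 s2 N Hc Hd; simpl in *; auto.
  destruct Hd as [h2 [Hw Hm]].
  destruct (sim _ _ _ Hw _ _ Hc) as [h1 [Hw1 Hr]].
  exists h1; split; auto.
  destruct h1, h2; simpl in Hr; try contradiction; destruct N; try contradiction.
  - eapply IH; eauto.
  - destruct Hr, Hm; split; eapply IH; eauto.
  - congruence.
Qed.

Fixpoint lamenv (m : nat) : list sentry := match m with 0 => [] | S m' => lamS (lamenv m') end.

Lemma lookup_lamenv m k : k < m -> lookup k (lamenv m) = LkVar k.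
Proof.
  revert k; induction m as [|m IH]; intros k Hk; [lia|].
  destruct k as [|k]; simpl; auto.
  change (lookup k (shift (lamenv m)) = LkVar (S k)).
  rewrite lookup_shift, IH by lia. reflexivity.
Qed.

Lemma agree_den D : forall t N m, agree D t N -> (forall k, ifree k N -> k < m) -> denD D t (lamenv m) N.
Proof.
  induction D as [|D IH]; intros t N m Ha Hf; simpl; auto.
  destruct t as [k|u|a b|bs u], N as [k'|N'|A B]; simpl in Ha; try contradiction.
  - subst. exists (HVar k'); split; auto. constructor. apply lookup_lamenv. apply Hf; constructor.
  - exists (HLam u (lamenv m)); split; [constructor|].
    change (denD D u (lamenv (S m)) N'). apply IH; auto.
    intros [|k] Hk; [lia|]. assert (k < m); [apply Hf; constructor; auto|lia].
  - destruct Ha. exists (HApp a b (lamenv m)); split; [constructor|].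
    split; apply IH; auto; intros k Hk; apply Hf; [apply ifree_appl|apply ifree_appr]; auto.
Qed.

Lemma unfold_den L M : iclosed M -> unfolds_to L M -> forall D, denD D L [] M.
Proof.
  intros Hcl (ts & steps & E0 & Hs & Hc) D.
  destruct (Hc D) as [N HN]. destruct (HN N (le_n _)) as [_ Ha].
  assert (Hd : denD D (ts N) [] M).
  { change (@nil sentry) with (lamenv 0). apply agree_den; auto.
    intros k Hk; exfalso; apply (Hcl k); auto. }
  subst L. clear HN Ha. induction N as [|N IHN]; auto.
  apply IHN. eapply back; [|exact Hd].
  specialize (Hs N). destruct (steps N) as [d|].
  - constructor. eapply fr_step; [exact Hs|]. split; intros; simpl in *; auto; discriminate.
  - destruct Hs as [E _]. rewrite E. apply crel_refl.
Qed.

CoInductive den : lterm -> list sentry -> iterm -> Prop :=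
| den_lam t s t' s' N : whnf t s (HLam t' s') -> den t' (lamS s') N -> den t s (IAbs N)
| den_app t s a b s' A B : whnf t s (HApp a b s') -> den a s' A -> den b s' B -> den t s (IApp A B)
| den_var t s j : whnf t s (HVar j) -> den t s (IVar j).

Lemma whnf_det t s h1 : whnf t s h1 -> forall h2, whnf t s h2 -> h1 = h2.
Proof.
  induction 1 as [t s|a b s|bs t s h Hw IH|i s j Hl|i s b tau h Hl Hw IH]; intros h2 H2;
    inversion H2; subst; auto; try congruence.
  - match goal with H : lookup i s = LkBody _ _ |- _ => rewrite Hl in H; inversion H; subst end.
    apply IH; auto.
Qed.

Lemma denD_den : forall t s N, (forall D, denD D t s N) -> den t s N.
Proof.
  cofix CH. intros t s N H.
  destruct (H 1) as [h [Hw Hm]].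
  destruct h as [t' s'|a b s'|j]; destruct N as [k|N'|A B]; try contradiction.
  - apply den_lam with t' s'; auto. apply CH. intros D.
    destruct (H (S D)) as [h2 [Hw2 Hm2]]. rewrite <- (whnf_det _ _ _ Hw _ Hw2) in Hm2. exact Hm2.
  - apply den_app with a b s'; auto; apply CH; intros D;
    destruct (H (S D)) as [h2 [Hw2 Hm2]]; rewrite <- (whnf_det _ _ _ Hw _ Hw2) in Hm2; apply Hm2.
  - subst. apply den_var; auto.
Qed.


Definition frob (t : iterm) : iterm :=
  match t with IVar k => IVar k | IAbs u => IAbs u | IApp a b => IApp a b end.
Lemma frob_eq t : t = frob t.
Proof. destruct t; reflexivity. Qed.

Lemma idown_var c k : idown c (IVar k) = if k <? c then IVar k else IVar (k - 1).
Proof. rewrite (frob_eq (idown c (IVar k))). simpl. destruct (k <? c); reflexivity. Qed.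
Lemma idown_abs c t : idown c (IAbs t) = IAbs (idown (S c) t).
Proof. rewrite (frob_eq (idown c (IAbs t))). reflexivity. Qed.
Lemma idown_app c t u : idown c (IApp t u) = IApp (idown c t) (idown c u).
Proof. rewrite (frob_eq (idown c (IApp t u))). reflexivity. Qed.

Definition decj (c j : nat) : nat := if j <? c then j else j - 1.
Definition decE (c : nat) (x : sentry) : sentry :=
  match x with
  | SLam (Some j) => if j =? c then SLam None else SLam (Some (decj c j))
  | e => e
  end.
Definition dec (c : nat) (s : list sentry) := map (decE c) s.

Definition declk (c : nat) (l : lk) : lk :=
  match l with
  | LkVar j => if j =? c then LkNone else LkVar (decj c j)
  | LkBody b t => LkBody b (dec c t)
  | LkNone => LkNone
  end.

Lemma lookup_dec c i s : lookup i (dec c s) = declk c (lookup i s).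
Proof.
  revert i; induction s as [|[[j|]|bs] s IH]; intros i; simpl; auto.
  - destruct (j =? c) eqn:E; destruct i; simpl; rewrite ?E; auto.
  - destruct i; simpl; auto.
  - destruct (i <? length bs); simpl; auto.
Qed.

Definition dech (c : nat) (h : head) : head :=
  match h with
  | HLam t s => HLam t (dec c s)
  | HApp a b s => HApp a b (dec c s)
  | HVar j => HVar (decj c j)
  end.

Lemma whnf_dec c t s h : whnf t s h -> h <> HVar c -> whnf t (dec c s) (dech c h).
Proof.
  induction 1 as [t s|a b s|bs t s h Hw IH|i s j Hl|i s b tau h Hl Hw IH]; intros Hne; simpl.
  - constructor.
  - constructor.
  - constructor. apply IH; auto.
  - constructor. rewrite lookup_dec, Hl. simpl. destruct (j =? c) eqn:E; auto.
    apply Nat.eqb_eq in E; subst; congruence.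
  - eapply wh_body; [|apply IH; auto]. rewrite lookup_dec, Hl. reflexivity.
Qed.

Lemma lamS_dec c s : lamS (dec c s) = dec (S c) (lamS s).
Proof.
  unfold lamS, dec, shift. simpl. f_equal. rewrite !map_map. apply map_ext.
  intros [[j|]|bs]; simpl; auto. unfold decj.
  destruct (Nat.eqb_spec j c); simpl; auto.
  destruct (Nat.ltb_spec j c); destruct (Nat.ltb_spec (S j) (S c)); simpl; try lia; auto.
  f_equal. f_equal. lia.
Qed.

Lemma den_dec : forall t s N c, den t s N -> ~ ifree c N -> den t (dec c s) (idown c N).
Proof.
  cofix CH. intros t s N c Hd Hf. destruct Hd as [t s t' s' N Hw Hd|t s a b s' A B Hw Ha Hb|t s j Hw].
  - rewrite idown_abs. apply den_lam with t' (dec c s').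
    + apply (whnf_dec c) in Hw; [exact Hw|discriminate].
    + rewrite lamS_dec. apply CH; auto. intros H; apply Hf; constructor; auto.
  - rewrite idown_app. apply den_app with a b (dec c s').
    + apply (whnf_dec c) in Hw; [exact Hw|discriminate].
    + apply CH; auto. intros H; apply Hf; apply ifree_appl; auto.
    + apply CH; auto. intros H; apply Hf; apply ifree_appr; auto.
  - assert (j <> c) by (intros ->; apply Hf; constructor).
    rewrite idown_var. apply (whnf_dec c) in Hw; [|congruence]. simpl in Hw.
    unfold decj in Hw. destruct (j <? c); apply den_var; auto.
Qed.

Lemma den_det : forall t s N1 N2, den t s N1 -> den t s N2 -> ibisim N1 N2.
Proof.
  cofix CH. intros t s N1 N2 H1 H2.
  destruct H1 as [t s t' s' N Hw Hd|t s a b s' A B Hw Ha Hb|t s j Hw];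
  destruct H2 as [t0 s0 t0' s0' N0 Hw0 Hd0|t0 s0 a0 b0 s0' A0 B0 Hw0 Ha0 Hb0|t0 s0 j0 Hw0];
  pose proof (whnf_det _ _ _ Hw _ Hw0) as E; try discriminate; inversion E; subst.
  - constructor. eapply CH; eauto.
  - constructor; eapply CH; eauto.
  - constructor.
Qed.

Fixpoint somes (s : list sentry) : list nat :=
  match s with
  | [] => []
  | SLam (Some j) :: s' => j :: somes s'
  | _ :: s' => somes s'
  end.

Lemma somes_app a b : somes (a ++ b) = somes a ++ somes b.
Proof. induction a as [|[[j|]|bs] a IH]; simpl; auto. rewrite IH; auto. Qed.

Lemma somes_shift s : somes (shift s) = map S (somes s).
Proof. induction s as [|[[j|]|bs] s IH]; simpl; auto. rewrite IH; auto. Qed.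

Lemma somes_lamS s : somes (lamS s) = 0 :: map S (somes s).
Proof. unfold lamS. simpl. rewrite somes_shift. auto. Qed.

Lemma lookup_var_in i s j : lookup i s = LkVar j -> In j (somes s).
Proof.
  revert i; induction s as [|[[k|]|bs] s IH]; intros i H; simpl in *; try discriminate.
  - destruct i; [inversion H; auto|right; eauto].
  - destruct i; [discriminate|eauto].
  - destruct (i <? length bs); [discriminate|eauto].
Qed.

Lemma lookup_body i s b tau : lookup i s = LkBody b tau ->
  exists pre bs rest, s = pre ++ tau /\ tau = SLet bs :: rest /\ In b bs.
Proof.
  revert i; induction s as [|[o|bs] s IH]; intros i H; simpl in *; try discriminate.
  - destruct i; [destruct o; discriminate|].
    destruct (IH _ H) as (pre & bs & rest & E1 & E2 & E3).
    exists (SLam o :: pre), bs, rest. subst; auto.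
  - destruct (Nat.ltb_spec i (length bs)).
    + inversion H; subst. exists [], bs, s. split; auto. split; auto. apply nth_In; auto.
    + destruct (IH _ H) as (pre & bs' & rest & E1 & E2 & E3).
      exists (SLet bs :: pre), bs', rest. subst; auto.
Qed.

Definition henv (h : head) : list sentry :=
  match h with HLam _ s => s | HApp _ _ s => s | HVar _ => [] end.

Lemma whnf_somes t s h : whnf t s h ->
  match h with HVar j => In j (somes s) | _ => exists pre, somes s = pre ++ somes (henv h) end.
Proof.
  induction 1 as [t s|a b s|bs t s h Hw IH|i s j Hl|i s b tau h Hl Hw IH]; simpl.
  - exists []; auto.
  - exists []; auto.
  - destruct h; simpl in *; auto.
  - eapply lookup_var_in; eauto.
  - destruct (lookup_body _ _ _ _ Hl) as (pre & bs & rest & E1 & _ & _).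
    rewrite E1, somes_app. destruct h; simpl in *.
    + destruct IH as [p E]. exists (somes pre ++ p). rewrite E, app_assoc; auto.
    + destruct IH as [p E]. exists (somes pre ++ p). rewrite E, app_assoc; auto.
    + apply in_or_app; auto.
Qed.

Lemma den_free k N : ifree k N -> forall t s, den t s N -> In k (somes s).
Proof.
  induction 1 as [k|k u Hf IH|k u v Hf IH|k u v Hf IH]; intros t s Hd; inversion Hd; subst;
  match goal with Hw : whnf _ _ _ |- _ => pose proof (whnf_somes _ _ _ Hw) as X; simpl in X end.
  - auto.
  - destruct X as [pre E].
    match goal with Hd' : den _ (lamS _) u |- _ => specialize (IH _ _ Hd') end.
    rewrite somes_lamS in IH. destruct IH as [IH|IH]; [discriminate|].
    apply in_map_iff in IH. destruct IH as [x [Ex Hx]]. injection Ex as ->.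
    rewrite E. apply in_or_app; auto.
  - destruct X as [pre E]. rewrite E. apply in_or_app. right. eapply IH; eauto.
  - destruct X as [pre E]. rewrite E. apply in_or_app. right. eapply IH; eauto.
Qed.


Fixpoint lterm_ind2 (P : lterm -> Prop) (HV : forall k, P (LVar k))
  (HL : forall t, P t -> P (LLam t)) (HA : forall a b, P a -> P b -> P (LApp a b))
  (HLet : forall bs t, (forall b, In b bs -> P b) -> P t -> P (LLet bs t)) (t : lterm) {struct t} : P t :=
  match t with
  | LVar k => HV k
  | LLam u => HL u (lterm_ind2 P HV HL HA HLet u)
  | LApp a b => HA a b (lterm_ind2 P HV HL HA HLet a) (lterm_ind2 P HV HL HA HLet b)
  | LLet bs u => HLet bs u
      ((fix go (l : list lterm) : forall b, In b l -> P b :=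
          match l with
          | [] => fun b H => False_ind _ H
          | x :: l' => fun b H => match H with
                                  | or_introl E => eq_ind x P (lterm_ind2 P HV HL HA HLet x) b E
                                  | or_intror H' => go l' b H'
                                  end
          end) bs)
      (lterm_ind2 P HV HL HA HLet u)
  end.

Fixpoint poss (t : lterm) (e : list entry) {struct t} : list (lterm * list entry) :=
 (t, e) :: match t with
 | LVar _ => []
 | LLam u => poss u (ELam :: e)
 | LApp a b => poss a e ++ poss b e
 | LLet bs u => poss u (ELet bs :: e) ++ flat_map (fun b => poss b (ELet bs :: e)) bs
 end.

Lemma poss_sub t : forall e x, In x (poss t e) -> forall y, In y (poss (fst x) (snd x)) -> In y (poss t e).
Proof.
  induction t as [k|u IH|a b IHa IHb|bs u IHb IH] using lterm_ind2; intros e x Hx y Hy;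
    simpl in Hx; destruct Hx as [<-|Hx]; auto.
  - contradiction.
  - right. eapply IH; eauto.
  - right. apply in_app_or in Hx. apply in_or_app. destruct Hx; [left; eapply IHa|right; eapply IHb]; eauto.
  - right. apply in_app_or in Hx. apply in_or_app. destruct Hx as [Hx|Hx].
    + left; eapply IH; eauto.
    + right. apply in_flat_map in Hx. destruct Hx as [b [Hb Hx]].
      apply in_flat_map. exists b; split; auto. eapply IHb; eauto.
Qed.

Lemma poss_head t e : In (t, e) (poss t e).
Proof. destruct t; left; auto. Qed.

Definition erase (s : list sentry) : list entry :=
  map (fun x => match x with SLam _ => ELam | SLet bs => ELet bs end) s.

Section Reach.
Variable L : lterm.
Let PL := poss L [].

Lemma reach_child t e c : In (t, e) PL -> In c (poss t e) -> In c PL.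
Proof. intros H1 H2. apply (poss_sub L [] (t, e) H1 c H2). Qed.

Definition wfe (e : list entry) := forall pre bs e', e = pre ++ ELet bs :: e' ->
  forall b, In b bs -> In (b, ELet bs :: e') PL.

Definition good (t : lterm) (s : list sentry) := In (t, erase s) PL /\ wfe (erase s).

Lemma erase_app a b : erase (a ++ b) = erase a ++ erase b.
Proof. unfold erase; apply map_app. Qed.
Lemma erase_shift s : erase (shift s) = erase s.
Proof. unfold erase, shift. rewrite map_map. apply map_ext. intros [[j|]|bs]; auto. Qed.
Lemma erase_dec c s : erase (dec c s) = erase s.
Proof. unfold erase, dec. rewrite map_map. apply map_ext. intros [[j|]|bs]; simpl; auto.
  destruct (j =? c); auto. Qed.

Lemma good_whnf t s h : whnf t s h -> good t s ->
  match h with HLam t' s' => good (LLam t') s' | HApp a b s' => good (LApp a b) s' | HVar _ => True end.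
Proof.
  induction 1 as [t s|a b s|bs t s h Hw IH|i s j Hl|i s b tau h Hl Hw IH]; intros G; destruct G as [G1 G2]; auto.
  - split; auto.
  - split; auto.
  - apply IH. split.
    + eapply reach_child; [exact G1|]. simpl. right. apply in_or_app; left. apply poss_head.
    + intros [|x pre] bs' e' E b Hb; simpl in E; inversion E; subst.
      * eapply reach_child; [exact G1|]. simpl. right. apply in_or_app; right.
        apply in_flat_map. exists b; split; auto. apply poss_head.
      * eapply G2; eauto.
  - destruct (lookup_body _ _ _ _ Hl) as (pre & bs & rest & E1 & E2 & E3). subst.
    apply IH. rewrite erase_app in G2. simpl in G2 |- *. split.
    + eapply G2; eauto.
    + intros pre' bs' e' E b' Hb'. eapply (G2 (erase pre ++ pre')); eauto.
      rewrite <- app_assoc, <- E. reflexivity.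
Qed.

Lemma good_lam t s : good (LLam t) s -> good t (lamS s).
Proof.
  intros G; destruct G as [G1 G2]. unfold lamS. split; simpl; rewrite erase_shift.
  - eapply reach_child; [exact G1|]. simpl. right; apply poss_head.
  - intros [|x pre] bs e' E b Hb; simpl in E; inversion E; subst. eapply G2; eauto.
Qed.

Lemma good_app a b s : good (LApp a b) s -> good a s /\ good b s.
Proof.
  intros G; destruct G as [G1 G2]. split; split; auto; eapply reach_child; try exact G1; simpl; right;
    apply in_or_app; [left|right]; apply poss_head.
Qed.

Lemma good_dec c t s : good t s -> good t (dec c s).
Proof. unfold good; rewrite erase_dec; auto. Qed.
End Reach.


Lemma seq_prefix a n pre x : seq a n = pre ++ x -> In a x -> pre = [].
Proof.
  intros E Hx. destruct pre as [|y pre]; auto. exfalso.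
  destruct n; simpl in E; [discriminate|]. inversion E; subst.
  assert (In y (seq (S y) n)) by (rewrite H1; apply in_or_app; auto).
  apply in_seq in H. lia.
Qed.

Lemma somes_after s s' n pre : somes s = seq 0 n -> somes s = pre ++ somes s' ->
  (n = 0 \/ In 0 (somes s')) -> somes s' = seq 0 n.
Proof.
  intros E1 E2 [->|Hi].
  - simpl in E1. rewrite E1 in E2. symmetry in E2. apply app_eq_nil in E2. destruct E2; auto.
  - rewrite E1 in E2. pose proof (seq_prefix _ _ _ _ E2 Hi). subst. auto.
Qed.

Lemma somes_dec0 s : somes (dec 0 s) = map pred (filter (fun j => negb (j =? 0)) (somes s)).
Proof.
  induction s as [|[[j|]|bs] s IH]; simpl; auto.
  destruct j as [|j]; simpl; auto. rewrite IH. unfold decj. simpl. rewrite Nat.sub_0_r. auto.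
Qed.

Lemma seq_filter_pred a n : map pred (filter (fun j => negb (j =? 0)) (seq (S a) n)) = seq a n.
Proof.
  revert a; induction n as [|n IH]; intros a; simpl; auto. rewrite IH. auto.
Qed.

Section Inv.
Variable L : lterm.

Definition Inv (p : pterm) : Prop :=
  exists t s, good L t s /\ somes s = seq 0 (fst p) /\ den t s (snd p).

Lemma inv_del n N : Inv (S n, N) -> ~ ifree 0 N -> Inv (n, idown 0 N).
Proof.
  intros (t & s & G & E & D) Hf. exists t, (dec 0 s). split; [apply good_dec; auto|]. split.
  - simpl in E |- *. rewrite somes_dec0, E. simpl. apply seq_filter_pred.
  - simpl. apply den_dec; auto.
Qed.

Lemma inv_struct n N a q : Inv (n, N) -> (n = 0 \/ ifree 0 N) -> reg_step (n, N) a q -> a <> RDel -> Inv q.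
Proof.
  intros (t & s & G & E & D) Hf Hs Ha. simpl in E, D.
  destruct D as [t s t' s' N' Hw Hd|t s a0 b0 s' A B Hw HA HB|t s j Hw].
  - inversion Hs; subst; [|congruence]. pose proof (good_whnf L _ _ _ Hw G) as G'.
    pose proof (whnf_somes _ _ _ Hw) as [pre Ep]. simpl in Ep.
    assert (Es : somes s' = seq 0 n).
    { apply (somes_after s s' n pre); auto. destruct Hf as [->|Hf]; [left; auto|right].
      inversion Hf; subst. pose proof (den_free _ _ H1 _ _ Hd) as X. rewrite somes_lamS in X.
      destruct X as [X|X]; [discriminate|]. apply in_map_iff in X. destruct X as [x [Ex Hx]].
      injection Ex as ->. auto. }
    exists t', (lamS s'). split; [apply good_lam; auto|]. split; auto.
    rewrite somes_lamS, Es, seq_shift. reflexivity.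
  - pose proof (good_whnf L _ _ _ Hw G) as G'. apply good_app in G'. destruct G' as [G1 G2].
    pose proof (whnf_somes _ _ _ Hw) as [pre Ep]. simpl in Ep.
    assert (Es : somes s' = seq 0 n).
    { apply (somes_after s s' n pre); auto. destruct Hf as [->|Hf]; [left; auto|right].
      inversion Hf; subst; eapply den_free; eauto. }
    inversion Hs; subst; [| |congruence].
    + exists a0, s'. auto.
    + exists b0, s'. auto.
  - inversion Hs; subst. congruence.
Qed.
End Inv.

Definition eager (p : pterm) (a : reg_label) : Prop :=
  (0 < fst p /\ ~ ifree 0 (snd p) /\ a = RDel) \/
  ((fst p = 0 \/ ifree 0 (snd p)) /\ a <> RDel /\ exists q, reg_step p a q).

Definition Sg (M : iterm) : strategy := fun l a => exists p, reg_seq (0, M) l p /\ eager p a.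

Lemma reg_step_det p a q1 q2 : reg_step p a q1 -> reg_step p a q2 -> q1 = q2.
Proof. intros H1 H2; inversion H1; subst; inversion H2; subst; auto. Qed.

Lemma reg_seq_det p0 l p : reg_seq p0 l p -> forall q, reg_seq p0 l q -> p = q.
Proof.
  induction 1 as [|l p a q Hs IH Hst]; intros q' H2.
  - inversion H2; auto. destruct l; discriminate.
  - inversion H2; subst.
    + destruct l; discriminate.
    + apply app_inj_tail in H. destruct H; subst.
      rewrite (IH _ H0) in Hst. eapply reg_step_det; eauto.
Qed.

Lemma follows_seq S p0 l p : follows S p0 l p -> reg_seq p0 l p.
Proof. induction 1; econstructor; eauto. Qed.

Lemma scope_Sg M : scope_delimiting (Sg M) (0, M).
Proof.
  intros l p Hs [a [q Hq]]. split.
  - destruct (classic (0 < fst p /\ ~ ifree 0 (snd p))) as [Y|Y].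
    + exists RDel, p. split; auto. left. destruct Y; auto.
    + exists a, p. split; auto. right. split; [|split; eauto].
      * destruct (fst p) eqn:E; [left; auto|right]. apply NNPP. intros Hn. apply Y. split; auto; lia.
      * intros ->. inversion Hq; subst. apply Y. simpl. split; auto; lia.
  - intros a' [p' [Hs' He]]. rewrite <- (reg_seq_det _ _ _ Hs _ Hs') in He.
    destruct He as [(H1 & H2 & ->)|(_ & _ & Hq')]; auto.
    destruct p as [[|n] N]; simpl in H1; [lia|]. eexists; constructor; auto.
Qed.

Lemma inv_follows L M l p : den L [] M -> follows (Sg M) (0, M) l p -> Inv L p.
Proof.
  intros Hd. induction 1 as [|l p a q Hf IH HS Hst].
  - exists L, []. split; [|split; auto]. split; simpl; [apply poss_head|].
    intros pre bs e' E. destruct pre; discriminate.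
  - destruct HS as [p' [Hs' He]]. rewrite <- (reg_seq_det _ _ _ (follows_seq _ _ _ _ Hf) _ Hs') in He.
    destruct He as [(H1 & H2 & ->)|(H1 & H2 & _)].
    + inversion Hst; subst. apply inv_del; auto.
    + destruct p as [n N]. eapply inv_struct; eauto.
Qed.


Fixpoint enum_sig (b : nat) (e : list entry) : list (list sentry) :=
  match e with
  | [] => [[]]
  | ELam :: e' => flat_map (fun s => (SLam None :: s) :: map (fun j => SLam (Some j) :: s) (seq 0 b))
                     (enum_sig b e')
  | ELet bs :: e' => map (cons (SLet bs)) (enum_sig b e')
  end.

Lemma enum_in b s : (forall j, In j (somes s) -> j < b) -> In s (enum_sig b (erase s)).
Proof.
  induction s as [|[[j|]|bs] s IH]; intros H; simpl in *.
  - left; auto.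
  - apply in_flat_map. exists s. split; [apply IH; auto|]. right. apply in_map_iff.
    exists j; split; auto. apply in_seq. specialize (H j (or_introl eq_refl)). lia.
  - apply in_flat_map. exists s. split; [apply IH; auto|]. left; auto.
  - apply in_map. apply IH; auto.
Qed.

Lemma somes_len s : length (somes s) <= length s.
Proof. induction s as [|[[j|]|bs] s IH]; simpl; lia. Qed.

Lemma finite_keys (K : Type) (keys : list K) (R : pterm -> K -> Prop) (P : pterm -> Prop) :
  (forall p, P p -> exists k, In k keys /\ R p k) ->
  (forall p q k, R p k -> R q k -> pbisim p q) -> finite_pset P.
Proof.
  intros Hc Hd.
  assert (G : forall ks, exists ps, forall p, P p -> (exists k, In k ks /\ R p k) ->
                 exists q, In q ps /\ pbisim p q).
  { induction ks as [|k ks IH].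
    - exists []. intros p _ [k [[] _]].
    - destruct IH as [ps Hps].
      destruct (classic (exists p0, P p0 /\ R p0 k)) as [[p0 [HP0 HR0]]|N].
      + exists (p0 :: ps). intros p Hp [k' [[<-|Hk] Hr]].
        * exists p0; split; [left; auto|]. eapply Hd; eauto.
        * destruct (Hps p Hp) as [q [Hq Hb]]; [eauto|]. exists q; split; [right|]; auto.
      + exists ps. intros p Hp [k' [[<-|Hk] Hr]].
        * exfalso; apply N; eauto.
        * apply Hps; eauto. }
  destruct (G keys) as [ps Hps]. exists ps. intros p Hp. apply Hps; auto.
Qed.

Theorem main (M : iterm) : iclosed M -> letrec_expressible M -> strongly_regular M.
Proof.
  intros Hcl [L HL].
  assert (Hd : den L [] M) by (apply denD_den; apply unfold_den; auto).
  exists (Sg M). split; [apply scope_Sg|].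
  apply finite_keys with
    (keys := flat_map (fun x => map (fun s => (fst x, s)) (enum_sig (length (snd x)) (snd x))) (poss L []))
    (R := fun p k => somes (snd k) = seq 0 (fst p) /\ den (fst k) (snd k) (snd p)).
  - intros p [l Hf]. destruct (inv_follows L M l p Hd Hf) as (t & s & [G1 _] & E & D).
    exists (t, s). split; auto.
    apply in_flat_map. exists (t, erase s). split; auto. apply in_map. simpl.
    replace (length (erase s)) with (length s) by (unfold erase; rewrite length_map; auto).
    apply enum_in. intros j Hj. rewrite E in Hj. apply in_seq in Hj.
    pose proof (somes_len s). rewrite E, length_seq in H. lia.
  - intros [n1 N1] [n2 N2] [t s] [E1 D1] [E2 D2]. simpl in *. split.
    + rewrite E1 in E2. apply (f_equal (@length nat)) in E2. rewrite !length_seq in E2. auto.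
    + eapply den_det; eauto.
Qed.


Theorem mainTheorem8 (M : iterm) :
  iclosed M -> letrec_expressible M -> strongly_regular M.
Proof. exact (main M). Qed.
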